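(* Let $\mathcal{A}$ be a set of $N$ arms and let $1\le B\le N$. Consider any deterministic algorithm which, in each round $t=1,\dots,T$, chooses a subset $S_t\subset\mathcal{A}$ with $|S_t|=B$ as a function of the previously revealed cost functions $c_1,\dots,c_{t-1}$ (full feedback). Then its worst-case regret satisfies \[R_T^*\ \ge\ \left(1-\frac{B}{N}\right)T.\]
   Context: In each round $t\in[T]$ an (oblivious) adversary fixes a cost function $c_t:\mathcal{A}\to[0,1]$; the algorithm picks $S_t\subset\mathcal{A}$, $|S_t|=B$, and incurs cost $c_t(S_t):=\min_{a\in S_t}c_t(a)$; in the full feedback setting the whole function $c_t$ is then revealed. For an algorithm $\mathbf{ALG}$ the worst-case expected regret is $R_T^*(\mathbf{ALG}):=\max_{c_1,\dots,c_T}\mathbb{E}\left[\sum_{t=1}^T c_t(S_t)-\min_{a^*\in\mathcal{A}}\sum_{t=1}^T c_t(a^* )\right]$, the expectation being over the algorithm's randomness. *)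

(* Defs.v *)
From mathcomp Require Import all_boot all_order all_algebra.
Set Implicit Arguments. Unset Strict Implicit. Unset Printing Implicit Defensive.
Import Order.TTheory GRing.Theory Num.Theory.
Local Open Scope ring_scope.

(* Rounds are indexed by t : 'I_T (round t+1 of the paper).
   A cost sequence assigns to each round a cost function A -> R. *)
Definition costs (R : realFieldType) (A : finType) (T : nat) := 'I_T -> A -> R.

Definition unit_costs (R : realFieldType) (A : finType) (T : nat)
  (c : 'I_T -> A -> R) : Prop :=
  forall t a, 0 <= c t a <= 1.

Definition history (R : realFieldType) (A : finType) (t : nat) := 'I_t -> A -> R.

Definition unit_history (R : realFieldType) (A : finType) (t : nat)
  (h : history R A t) : Prop :=
  forall s a, 0 <= h s a <= 1.

Definition det_alg (R : realFieldType) (A : finType) (T : nat) :=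
  forall t : 'I_T, history R A t -> {set A}.

Definition picks_B (R : realFieldType) (A : finType) (T B : nat)
  (alg : det_alg R A T) : Prop :=
  forall (t : 'I_T) (h : history R A t), unit_history h -> #|alg t h| = B.

Definition hist_of (R : realFieldType) (A : finType) (T : nat)
  (c : 'I_T -> A -> R) (t : 'I_T) : history R A t :=
  fun s => c (widen_ord (ltnW (ltn_ord t)) s).

Definition played (R : realFieldType) (A : finType) (T : nat)
  (alg : det_alg R A T) (c : 'I_T -> A -> R) (t : 'I_T) : {set A} :=
  alg t (@hist_of R A T c t).

(* Cost of a set S: min_{a in S} f a.  The neutral element 1 is harmless since
   costs lie in [0,1] and S is nonempty (|S| = B >= 1). *)
Definition set_cost (R : realFieldType) (A : finType) (f : A -> R) (S : {set A}) : R :=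
  \big[Num.min/1]_(a in S) f a.

Definition arm_total (R : realFieldType) (A : finType) (T : nat)
  (c : 'I_T -> A -> R) (a : A) : R := \sum_(t < T) c t a.

(* min_{a_star} sum_t c_t(a_star); neutral element T is harmless since every arm's total
   cost is at most T when costs lie in [0,1] and A is nonempty. *)
Definition best_arm_total (R : realFieldType) (A : finType) (T : nat)
  (c : 'I_T -> A -> R) : R := \big[Num.min/T%:R]_(a : A) arm_total c a.

Definition regret (R : realFieldType) (A : finType) (T : nat)
  (alg : det_alg R A T) (c : 'I_T -> A -> R) : R :=
  \sum_(t < T) set_cost (c t) (played alg c t) - best_arm_total c.

(* Main.v *)
Require Import Defs.
From mathcomp Require Import all_boot all_order all_algebra.
From Stdlib Require Import FunctionalExtensionality.
Import Order.TTheory GRing.Theory Num.Theory.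
Local Open Scope ring_scope.

Section Adv.
Variables (R : realFieldType) (A : finType) (T : nat) (alg : det_alg R A T).

Definition step (n : nat) (g : nat -> A -> R) : A -> R :=
  match @insub nat (fun k => k < T)%N 'I_T n with
  | Some t => fun a => if a \in alg t (fun s : 'I_t => g (val s)) then 1 else 0
  | None => fun _ => 0
  end.

Fixpoint F (n : nat) : nat -> A -> R :=
  match n with
  | 0 => fun _ _ => 0
  | m.+1 => let g := F m in fun i => if i == m then step m g else g i
  end.

Lemma F_stable i m : (i < m)%N -> F m i = F i.+1 i.
Proof.
elim: m => [|m IH] //= lt; rewrite ltnS leq_eqVlt in lt.
case/orP: lt => [/eqP ->|lt]; first by rewrite eqxx.
by rewrite (ltn_eqF lt) IH.
Qed.

Definition cadv : 'I_T -> A -> R := fun t => F T t.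

Lemma hist_adv (t : 'I_T) : @hist_of R A T cadv t = (fun s : 'I_t => F t (val s)).
Proof.
apply: functional_extensionality => s.
rewrite /hist_of /cadv /= (@F_stable s T); last by apply: ltn_trans (ltn_ord s) (ltn_ord t).
by rewrite -(@F_stable s t).
Qed.

Lemma cadv_val (t : 'I_T) a :
  cadv t a = if a \in played alg cadv t then 1 else 0.
Proof.
rewrite /played hist_adv /cadv (@F_stable t T) //= eqxx /step.
by rewrite (valK t).
Qed.

End Adv.

Theorem proposition1 (R : realFieldType) (A : finType) (N B T : nat)
  (hN : #|A| = N) (hB1 : (1 <= B)%N) (hBN : (B <= N)%N)
  (alg : det_alg R A T) (halg : picks_B B alg) :
  exists c : 'I_T -> A -> R,
    unit_costs c /\ (1 - B%:R / N%:R) * T%:R <= regret alg c.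
Proof.
exists (@cadv R A T alg).
have hunit : unit_costs (@cadv R A T alg).
  by move=> t a; rewrite cadv_val; case: ifP => _; rewrite ?lexx ?ler01.
split => //.
have hcard t : #|played alg (@cadv R A T alg) t| = B.
  by apply: halg => s a; rewrite /played; apply: hunit.
have hset t : set_cost (@cadv R A T alg t) (played alg (@cadv R A T alg) t) = 1.
  rewrite /set_cost; apply: (big_ind (fun x => x = 1)) => //.
    by move=> x y -> ->; rewrite minxx.
  by move=> a ha; rewrite cadv_val ha.
rewrite /regret (eq_bigr (fun _ => 1)) => [|t _]; last exact: hset.
rewrite sumr_const card_ord.
have N0 : (0 < N)%N by apply: leq_trans hBN.
have N0R : 0 < N%:R :> R by rewrite ltr0n.
set best := best_arm_total _.
have hb : N%:R * best <= (T * B)%:R.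
  have -> : N%:R * best = \sum_(a : A) best by rewrite sumr_const hN mulr_natl.
  apply: (@le_trans _ _ (\sum_(a : A) arm_total (@cadv R A T alg) a)).
    by apply: ler_sum => a _; apply: bigmin_le.
  rewrite /arm_total exchange_big /=.
  rewrite [X in _ <= X](_ : _ = \sum_(t < T) (B%:R : R)); last by rewrite sumr_const card_ord natrM mulr_natl.
  apply: ler_sum => t _.
  rewrite (eq_bigr (fun a => if a \in played alg (@cadv R A T alg) t then 1 else 0)); last by move=> a _; rewrite cadv_val.
  by rewrite -big_mkcond /= sumr_const hcard.
have hb' : best <= T%:R * B%:R / N%:R.
  by rewrite ler_pdivlMr // mulrC -natrM.
by rewrite mulrBl mul1r lerB // mulrC mulrA.
Qed.
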